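(* Let $n,d\ge1$ and let $X$ be a lazy simple random walk on $\mathbb{Z}_n^d$ started at $X_0=0$. Let $f:\{1,2,\dots\}\to\mathbb{Z}_n^d$ be any function and let $a=(\lfloor n/2\rfloor,\dots,\lfloor n/2\rfloor)\in\mathbb{Z}_n^d$. Then for all $t\ge1$, \[ \mathbb{P}_0\big(X_1\neq f(1),\dots,X_t\neq f(t)\big)\le \mathbb{P}_0\big(X_1\neq a,\dots,X_t\neq a\big). \]
   Context: $\mathbb{Z}_n=\{0,1,\dots,n-1\}$ with addition mod $n$. The lazy simple random walk on $\mathbb{Z}_n^d$ is the Markov chain which at each step stays put with probability $1/2$ and otherwise moves from $x$ to $x\pm e_i$ ($i=1,\dots,d$, $e_i$ the standard unit vectors), each of these $2d$ moves having probability $1/(4d)$. *)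

(* Defs.v *)
From HB Require Import structures.
From mathcomp Require Import all_boot all_order all_algebra.
Set Implicit Arguments. Unset Strict Implicit. Unset Printing Implicit Defensive.
Import Order.TTheory GRing.Theory Num.Theory.
Local Open Scope ring_scope.

(* Z_n^d : points are finite functions 'I_d -> 'I_n, coordinates taken mod n. *)
Definition pt (n d : nat) := {ffun 'I_d -> 'I_n}.

Definition is_plus_e (n d : nat) (i : 'I_d) (x y : pt n d) : bool :=
  [forall j, val (y j) == (if j == i then (val (x i) + 1) %% n else val (x j))%N].

Definition is_minus_e (n d : nat) (i : 'I_d) (x y : pt n d) : bool :=
  [forall j, val (y j) == (if j == i then (val (x i) + n - 1) %% n else val (x j))%N].

Definition is_origin (n d : nat) (x : pt n d) : bool := [forall j, val (x j) == 0%N].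

(* transition kernel of the lazy simple random walk on Z_n^d:
   stay with prob 1/2, move to x +- e_i with prob 1/(4d) each
   (moves that coincide, e.g. when n <= 2, have their probabilities added) *)
Definition lazyP (R : realFieldType) (n d : nat) (x y : pt n d) : R :=
  (x == y)%:R / 2 +
  \sum_(i < d) ((is_plus_e i x y)%:R + (is_minus_e i x y)%:R) / (4 * d%:R).

(* P_0(X_1 <> f 1, ..., X_t <> f t): sum over paths p(0),...,p(t) with p(0) = 0
   and p(k) <> f k for 1 <= k <= t of the product of transition probabilities *)
Definition avoid_prob (R : realFieldType) (n d t : nat) (f : nat -> pt n d) : R :=
  \sum_(p : {ffun 'I_t.+1 -> pt n d} |
          is_origin (p ord0) && [forall k : 'I_t, p (lift ord0 k) != f k.+1])
    \prod_(k < t) lazyP R (p (widen_ord (leqnSn t) k)) (p (lift ord0 k)).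

(* Main.v *)
Require Import Defs.
From mathcomp Require Import all_boot all_order all_algebra.
From mathcomp Require Import zify lra.
Set Implicit Arguments. Unset Strict Implicit. Unset Printing Implicit Defensive.
Import Order.TTheory GRing.Theory Num.Theory.
Local Open Scope ring_scope.

Section Polar.
Variables (R : realFieldType) (T : finType) (K : T -> T -> R) (s : T -> T) (H : pred T).
Hypotheses (K0 : forall x y, 0 <= K x y) (sK : involutive s)
  (Hs : forall x, H x -> ~~ H (s x))
  (Hcov : forall x, [|| H x, H (s x) | s x == x])
  (Ks : forall x y, K (s x) (s y) = K x y)
  (KH : forall x y, H x -> H y -> K (s y) x <= K y x).

Lemma sinj : injective s. Proof. exact: inv_inj. Qed.

Lemma H_nfix x : H x -> (s x == x) = false.
Proof. by move=> hx; apply/negbTE/eqP => e; move: (Hs hx); rewrite e hx. Qed.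

Lemma pair_sum (F : T -> R) :
  \sum_y F y = \sum_(y | H y) (F y + F (s y)) + \sum_(y | s y == y) F y.
Proof.
rewrite big_split /= (bigID H) /= -addrA; congr (_ + _).
rewrite (bigID (fun y => s y == y)) /= addrC; congr (_ + _).
  rewrite [LHS](reindex_inj sinj) /=; apply: eq_bigl => y /=.
  rewrite sK; case hy: (H y); first by rewrite (negbTE (Hs hy)) eq_sym (H_nfix hy).
  have := Hcov y; rewrite hy /= => /orP [hsy|/eqP e]; first by rewrite hsy.
  by rewrite e eqxx andbF.
apply: eq_bigl => y; case hy: (H y) => //=; by rewrite H_nfix.
Qed.

Definition Kv (v : T -> R) (y : T) : R := \sum_x v x * K x y.
Definition kill (g : T) (v : T -> R) (y : T) : R := if y == g then 0 else v y.
Definition mv (g : T) : T := if H g then s g else g.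

Definition Inv (u w : T -> R) :=
  [/\ forall x, 0 <= w x, forall x, H x -> w (s x) <= w x,
      forall x, H x -> [/\ u x <= w x, u (s x) <= w x & u x + u (s x) <= w x + w (s x)]
    & forall x, s x == x -> u x <= w x].

Lemma Kfix y x : s y == y -> K y (s x) = K y x.
Proof. by move/eqP=> e; rewrite -{1}e Ks. Qed.

Lemma Ksw y x : K y (s x) = K (s y) x.
Proof. by rewrite -{2}(sK x) Ks. Qed.

Lemma Inv_K u w : Inv u w -> Inv (Kv u) (Kv w).
Proof.
case=> w0 wh uw uf; split.
- by move=> x; apply: sumr_ge0 => y _; apply: mulr_ge0.
- move=> x hx; rewrite /Kv (pair_sum (fun y => w y * K y (s x))) (pair_sum (fun y => w y * K y x)).
  apply: lerD; last by apply: ler_sum => y hy; rewrite Kfix.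
  apply: ler_sum => y hy; rewrite Ks Ksw.
  have A := KH hx hy; have B := K0 (s y) x; have C := wh _ hy.
  have D : 0 <= (w y - w (s y)) * (K y x - K (s y) x) by apply: mulr_ge0; lra.
  nra.
- move=> x hx; rewrite /Kv !(pair_sum (fun y => _ * K y (s x))) !(pair_sum (fun y => _ * K y x)).
  have E : forall v : T -> R, \sum_(y | s y == y) v y * K y (s x) = \sum_(y | s y == y) v y * K y x.
    by move=> v; apply: eq_bigr => y hy; rewrite Kfix.
  rewrite !E; split.
  + apply: lerD; last by apply: ler_sum => y /uf hy; apply: ler_wpM2r.
    apply: ler_sum => y hy; have A := KH hx hy; have B := K0 (s y) x.
    case: (uw _ hy) => a b c.
    have D : 0 <= (w y - u y) * (K y x - K (s y) x) by apply: mulr_ge0; lra.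
    have D2 : 0 <= (w y + w (s y) - u y - u (s y)) * K (s y) x by apply: mulr_ge0; lra.
    nra.
  + apply: lerD; last by apply: ler_sum => y /uf hy; apply: ler_wpM2r.
    apply: ler_sum => y hy; rewrite !Ksw sK; have A := KH hx hy; have B := K0 (s y) x.
    case: (uw _ hy) => a b c.
    have D : 0 <= (w y - u (s y)) * (K y x - K (s y) x) by apply: mulr_ge0; lra.
    have D2 : 0 <= (w y + w (s y) - u y - u (s y)) * K (s y) x by apply: mulr_ge0; lra.
    nra.
  + have L : forall a b c d a' b' c' d' : R, a + c <= a' + c' -> b + d <= b' + d' ->
      (a + b) + (c + d) <= (a' + b') + (c' + d') by move=> *; lra.
    apply: L; rewrite -!big_split /=.
      apply: ler_sum => y hy; rewrite !Ksw sK.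
      have B := K0 (s y) x; have B2 := K0 y x.
      case: (uw _ hy) => a b c.
      have D2 : 0 <= (w y + w (s y) - u y - u (s y)) * (K y x + K (s y) x) by apply: mulr_ge0; lra.
      nra.
    by apply: ler_sum => y /uf hy; rewrite -!mulrDl; apply: ler_wpM2r => //; lra.
- move=> x /[dup] hx /eqP e; rewrite /Kv !(pair_sum (fun y => _ * K y x)).
  apply: lerD; last by apply: ler_sum => y /uf hy; apply: ler_wpM2r.
  apply: ler_sum => y hy; rewrite -Ksw e.
  case: (uw _ hy) => a b c; have B := K0 y x.
  have D2 : 0 <= (w y + w (s y) - u y - u (s y)) * K y x by apply: mulr_ge0; lra.
  nra.
Qed.

Lemma mv_nH g : ~~ H (mv g).
Proof. rewrite /mv; case hg: (H g); [exact: Hs | by rewrite hg]. Qed.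

Lemma Inv_kill u w g : Inv u w -> Inv (kill g u) (kill (mv g) w).
Proof.
case=> w0 wh uw uf; rewrite /kill; split.
- by move=> x; case: ifP.
- move=> x hx; have -> : (x == mv g) = false.
    by apply/negbTE; apply: contraTneq hx => ->; apply: mv_nH.
  by case: ifP => _; [apply: w0 | apply: wh].
- move=> x hx; have -> : (x == mv g) = false.
    by apply/negbTE; apply: contraTneq hx => ->; apply: mv_nH.
  case: (uw _ hx) => a b c.
  case: (eqVneq x g) => [exg|nxg].
    subst g; rewrite (H_nfix hx) /mv hx eqxx; have := w0 x; split; lra.
  case: (eqVneq (s x) g) => [sxg|nsxg].
    subst g; rewrite /mv (negbTE (Hs hx)) eqxx; have := w0 x; split; lra.
  have -> : (s x == mv g) = false.
    rewrite /mv; case: ifP => _ //; last exact/negbTE.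
    by apply/negbTE; apply: contra nxg => /eqP/sinj ->.
  by split.
- move=> x hx; case: ifP => hxg; first by case: ifP => _ //; apply: w0.
  have -> : (x == mv g) = false.
    rewrite /mv; case: ifP => hg //.
    apply/negbTE/negP => /eqP ex; move/eqP: hx; rewrite ex sK => e.
    by rewrite ex -e eqxx in hxg.
  exact: uf.
Qed.
Fixpoint uvec (u0 : T -> R) (f : nat -> T) (t : nat) : T -> R :=
  if t is t'.+1 then kill (f t) (Kv (uvec u0 f t')) else u0.

Lemma polar (u0 : T -> R) (u00 : forall x, 0 <= u0 x)
  (u0h : forall x, H x -> u0 (s x) <= u0 x) (f : nat -> T) (t : nat) :
  \sum_y uvec u0 f t y <= \sum_y uvec u0 (fun k => mv (f k)) t y.
Proof.
have I : Inv (uvec u0 f t) (uvec u0 (fun k => mv (f k)) t).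
  elim: t => [|t IH] /=.
    by split => // x hx; split => //; apply: u0h.
  exact: Inv_kill (Inv_K IH).
case: I => w0 wh uw uf; rewrite !pair_sum; apply: lerD.
  by apply: ler_sum => y /uw [].
by apply: ler_sum => y /uf.
Qed.
End Polar.

Section Paths.
Variables (R : realFieldType) (T : finType) (K : T -> T -> R) (P0 : pred T) (f : nat -> T).

Definition Spath t y : R :=
  \sum_(p : {ffun 'I_t.+1 -> T} | P0 (p ord0) && [forall k : 'I_t, p (lift ord0 k) != f k.+1]
      && (p ord_max == y))
    \prod_(k < t) K (p (widen_ord (leqnSn t) k)) (p (lift ord0 k)).

Definition join t (q : {ffun 'I_t.+1 -> T}) (z : T) : {ffun 'I_t.+2 -> T} :=
  [ffun k : 'I_t.+2 => if (k < t.+1)%N then q (inord k) else z].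
Definition splitp t (p : {ffun 'I_t.+2 -> T}) : {ffun 'I_t.+1 -> T} * T :=
  ([ffun k : 'I_t.+1 => p (widen_ord (leqnSn _) k)], p ord_max).

Lemma join_splitp t : cancel (@splitp t) (fun qz => join qz.1 qz.2).
Proof.
move=> p; apply/ffunP => k; rewrite /join /splitp /= !ffunE; case: ifP => hk.
  by congr (p _); apply/val_inj; rewrite /= inordK.
by congr (p _); apply/val_inj => /=; move: (ltn_ord k) hk; rewrite ltnS => a /negbT; rewrite -leqNgt => b; apply/eqP; rewrite eqn_leq a b.
Qed.

Lemma splitp_join t : cancel (fun qz => join qz.1 qz.2) (@splitp t).
Proof.
move=> [q z]; rewrite /splitp /=; congr (_, _).
  apply/ffunP => k; rewrite !ffunE /= ltn_ord; congr (q _); apply/val_inj; by rewrite /= inordK.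
by rewrite ffunE /= ltnn.
Qed.

Lemma sum_join t (G : {ffun 'I_t.+2 -> T} -> R) :
  \sum_p G p = \sum_q \sum_z G (join q z).
Proof.
rewrite pair_big /=; rewrite (reindex (fun qz : {ffun 'I_t.+1 -> T} * T => join qz.1 qz.2)) //.
by exists (@splitp t) => x _; [apply: splitp_join | apply: join_splitp].
Qed.

Lemma S0 y : Spath 0 y = (P0 y)%:R.
Proof.
rewrite /Spath; under eq_bigr do rewrite big_ord0.
have E : forall p : {ffun 'I_1 -> T}, P0 (p ord0) && [forall k : 'I_0, p (lift ord0 k) != f k.+1]
      && (p ord_max == y) = (P0 y) && (p == [ffun=> y]).
  move=> p; case: (eqVneq p [ffun=> y]) => [->|ne]; first by rewrite !ffunE eqxx andbT; congr (_ && _); apply/forallP => -[].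
  rewrite andbF; apply/negbTE; rewrite negb_and; apply/orP; right.
  apply: contra ne => /eqP e; apply/eqP/ffunP => k; rewrite ffunE (ord1 k) -e; congr (p _); exact/val_inj.
rewrite (eq_bigl _ _ E); case: (P0 y) => /=; last by rewrite big_pred0.
by rewrite big_pred1_eq.
Qed.

Lemma joinE t q z (k : 'I_t.+2) (i : 'I_t.+1) : val k = val i -> join q z k = q i.
Proof. move=> e; rewrite ffunE e ltn_ord; congr (q _); apply/val_inj; by rewrite /= inordK. Qed.
Lemma joinEz t q z (k : 'I_t.+2) : val k = t.+1 -> join q z k = z.
Proof. by move=> e; rewrite ffunE e ltnn. Qed.

Lemma forall_recr t (P : 'I_t.+1 -> bool) :
  [forall k, P k] = [forall k : 'I_t, P (widen_ord (leqnSn t) k)] && P ord_max.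
Proof.
apply/forallP/andP => [H|[/forallP H1 H2] k]; first by split; [apply/forallP => k; apply H | apply H].
case: (unliftP ord_max k) => [j ->|->] //.
have -> : lift ord_max j = widen_ord (leqnSn t) j by apply/val_inj; rewrite /= /bump leqNgt ltn_ord.
exact: H1.
Qed.

Lemma S_rec t y : Spath t.+1 y = if y == f t.+1 then 0 else \sum_x Spath t x * K x y.
Proof.
rewrite /Spath big_mkcond sum_join /=.
have E : forall q z, (if P0 (join q z ord0) && [forall k : 'I_t.+1, join q z (lift ord0 k) != f k.+1]
      && (join q z ord_max == y) then
     \prod_(k < t.+1) K (join q z (widen_ord (leqnSn t.+1) k)) (join q z (lift ord0 k)) else 0)
   = if P0 (q ord0) && [forall k : 'I_t, q (lift ord0 k) != f k.+1] && (z != f t.+1) && (z == y)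
     then (\prod_(k < t) K (q (widen_ord (leqnSn t) k)) (q (lift ord0 k))) * K (q ord_max) z else 0.
  move=> q z; rewrite (@joinE _ _ _ _ (ord0)) // (@joinEz _ _ _ (ord_max)) // forall_recr.
  rewrite (@joinEz _ _ _ (lift ord0 ord_max)) //.
  have -> : [forall k : 'I_t, join q z (lift ord0 (widen_ord (leqnSn t) k)) != f k.+1]
     = [forall k : 'I_t, q (lift ord0 k) != f k.+1].
    by apply: eq_forallb => k; rewrite (@joinE _ _ _ _ (lift ord0 k)).
  rewrite !andbA; case: ifP => // _.
  rewrite big_ord_recr /= (@joinE _ _ _ _ (ord_max)) // (@joinEz _ _ _ (lift ord0 ord_max)) //.
  congr (_ * _); apply: eq_bigr => k _.
  by rewrite (@joinE _ _ _ _ (widen_ord (leqnSn t) k)) // (@joinE _ _ _ _ (lift ord0 k)).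
under eq_bigr do under eq_bigr do rewrite E.
have E2 : forall q : {ffun 'I_t.+1 -> T}, \sum_z (if P0 (q ord0) && [forall k : 'I_t, q (lift ord0 k) != f k.+1] && (z != f t.+1) && (z == y)
     then (\prod_(k < t) K (q (widen_ord (leqnSn t) k)) (q (lift ord0 k))) * K (q ord_max) z else 0)
   = if P0 (q ord0) && [forall k : 'I_t, q (lift ord0 k) != f k.+1] && (y != f t.+1) then
       (\prod_(k < t) K (q (widen_ord (leqnSn t) k)) (q (lift ord0 k))) * K (q ord_max) y else 0.
  move=> q; rewrite (bigD1 y) //= eqxx andbT [X in _ + X = _]big1 ?addr0 //.
  by move=> z /negbTE ->; rewrite andbF.
under eq_bigr do rewrite E2.
case: (eqVneq y (f t.+1)) => [->|ne].
  by apply: big1 => q _; rewrite andbF.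
under eq_bigr do rewrite andbT.
under [RHS]eq_bigr do rewrite mulr_suml.
rewrite (exchange_big_dep xpredT) //= -big_mkcond /=.
rewrite big_mkcond [RHS]big_mkcond; apply: eq_bigr => q _; case: ifP => hq.
  by rewrite [RHS](big_pred1 (q ord_max)) // => x /=; rewrite eq_sym.
by rewrite big_pred0.
Qed.

Lemma sumS t : \sum_y Spath t y =
  \sum_(p : {ffun 'I_t.+1 -> T} | P0 (p ord0) && [forall k : 'I_t, p (lift ord0 k) != f k.+1])
    \prod_(k < t) K (p (widen_ord (leqnSn t) k)) (p (lift ord0 k)).
Proof.
rewrite /Spath (exchange_big_dep (fun p : {ffun 'I_t.+1 -> T} => P0 (p ord0) && [forall k : 'I_t, p (lift ord0 k) != f k.+1])) /=; last by move=> y p _ /andP[].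
apply: eq_bigr => p hp; rewrite (big_pred1 (p ord_max)) // => y; by rewrite /= hp eq_sym.
Qed.

Lemma S_uvec t y : Spath t y = uvec K (fun x => (P0 x)%:R) f t y.
Proof.
elim: t y => [|t IH] y; first by rewrite S0.
rewrite S_rec /= /kill /Kv; case: ifP => // _; apply: eq_bigr => x _; by rewrite IH.
Qed.

End Paths.

Section Arith.
Local Open Scope nat_scope.
Variable n : nat.
Definition rr (c v : nat) : nat := if (v <= c)%N then c - v else c + n - v.

Lemma modS1 u : (u < n)%N -> ((u + 1) %% n = if (u.+1 < n)%N then u.+1 else 0)%N.
Proof.
move=> hu; case: ifP => [h|/negbT h]; first by rewrite addn1 modn_small.
have -> : (u + 1 = n)%N by lia.
by rewrite modnn.
Qed.

Lemma modP1 u : (u < n)%N -> ((u + n - 1) %% n = if (0 < u)%N then u.-1 else n.-1)%N.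
Proof.
move=> hu; case: ifP => h.
  have -> : (u + n - 1 = u.-1 + n)%N by lia.
  by rewrite modnDr modn_small //; lia.
by rewrite modn_small; lia.
Qed.

Lemma rr_lt c v : (c < n)%N -> (v < n)%N -> (rr c v < n)%N.
Proof. rewrite /rr => ? ?; case: ifP => [?|/negbT ?]; lia. Qed.

Lemma rrK c v : (c < n)%N -> (v < n)%N -> rr c (rr c v) = v.
Proof. rewrite /rr => ? ?; case: (leqP v c) => ?; case: ifP => [?|/negbT ?]; lia. Qed.

Lemma rr_plus c u v : (c < n)%N -> (u < n)%N -> (v < n)%N ->
  (rr c v == (rr c u + 1) %% n) = (v == (u + n - 1) %% n).
Proof.
move=> hc hu hv; rewrite modS1 ?rr_lt // modP1 //.
rewrite /rr; case: (leqP u c) => ?; case: (leqP v c) => ?; do 2 (case: ifP => [?|/negbT ?]); apply/eqP/eqP; lia.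
Qed.

Lemma rr_minus c u v : (c < n)%N -> (u < n)%N -> (v < n)%N ->
  (rr c v == (rr c u + n - 1) %% n) = (v == (u + 1) %% n).
Proof.
move=> hc hu hv; rewrite modP1 ?rr_lt // modS1 //.
rewrite /rr; case: (leqP u c) => ?; case: (leqP v c) => ?; do 2 (case: ifP => [?|/negbT ?]); apply/eqP/eqP; lia.
Qed.

Variable h : nat.
Hypothesis hh : n = h + h \/ n = h + h + 1.

Section F1.
Variable j : nat.
Hypothesis hj : (j < h)%N.
Definition H1 v := ((v <= j) || (n - h + 1 + j <= v))%N.
Lemma F1c : (j.*2.+1 < n)%N. Proof. lia. Qed.
Lemma F1_2 v : (v < n)%N -> H1 v -> ~~ H1 (rr j.*2.+1 v).
Proof. rewrite /H1 /rr => hv; case: (leqP v j.*2.+1) => ?; lia. Qed.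
Lemma F1_3 v : (v < n)%N -> [|| H1 v, H1 (rr j.*2.+1 v) | rr j.*2.+1 v == v].
Proof. rewrite /H1 /rr => hv; case: (leqP v j.*2.+1) => ?; lia. Qed.
Lemma F1_4 u v : (u < n)%N -> (v < n)%N -> H1 u -> H1 v ->
  (u == (rr j.*2.+1 v + 1) %% n) || (u == (rr j.*2.+1 v + n - 1) %% n) -> u = v.
Proof.
move=> hu hv; rewrite modS1 ?rr_lt ?F1c // modP1 ?rr_lt ?F1c // /H1 /rr.
case: (leqP v j.*2.+1) => ?; do 2 (case: ifP => [?|/negbT ?]); lia.
Qed.
Lemma F1_5 v : (v < n)%N -> H1 v -> rr j.*2.+1 v != 0%N.
Proof. rewrite /H1 /rr => hv; case: (leqP v j.*2.+1) => ?; lia. Qed.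
End F1.

Definition H2 v := (h < v)%N.
Lemma F2_2 v : (v < n)%N -> H2 v -> ~~ H2 (rr 0 v).
Proof. rewrite /H2 /rr => hv; case: (leqP v 0) => ?; lia. Qed.
Lemma F2_3 v : (v < n)%N -> [|| H2 v, H2 (rr 0 v) | rr 0 v == v].
Proof. rewrite /H2 /rr => hv; case: (leqP v 0) => ?; lia. Qed.
Lemma F2_4 u v : (u < n)%N -> (v < n)%N -> H2 u -> H2 v ->
  (u == (rr 0 v + 1) %% n) || (u == (rr 0 v + n - 1) %% n) -> u = v.
Proof.
move=> hu hv; have hn : (0 < n)%N by lia. rewrite modS1 ?rr_lt // modP1 ?rr_lt // /H2 /rr.
case: (leqP v 0) => ?; repeat (case: ifP => [?|/negbT ?]); lia.
Qed.
Lemma F2_5 v : (v < n)%N -> H2 v -> rr 0 v != 0%N.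
Proof. rewrite /H2 /rr => hv; case: (leqP v 0) => ?; lia. Qed.
Definition m1 j v := if H1 j v then rr j.*2.+1 v else v.
Definition m2 v := if H2 v then rr 0 v else v.
Fixpoint mseq k v := if k is k'.+1 then m1 k' (mseq k' v) else v.

Lemma mseq_bound k v : (v < n)%N -> (0 < k <= h)%N -> (k <= mseq k v <= n - h)%N.
Proof.
move=> hv; elim: k => [|k IH] //= hk.
rewrite /m1 /H1 /rr.
case: (posnP k) => [k0|kp].
  subst k => /=; case: (leqP v 1) => ?; case: ifP => [?|/negbT ?]; lia.
have := IH (ltac:(lia)) => ?.
case: (leqP (mseq k v) k.*2.+1) => ?; case: ifP => [?|/negbT ?]; lia.
Qed.

Lemma m2_mseq v : (v < n)%N -> m2 (mseq h v) = h.
Proof.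
move=> hv; case: (posnP h) => [h0|hp].
  rewrite h0 /= /m2 /H2 /rr; case: ifP => [?|/negbT ?]; try case: (leqP v 0) => ?; lia.
have := mseq_bound hv (ltac:(lia) : (0 < h <= h)%N) => ?.
rewrite /m2 /H2 /rr; case: (leqP (mseq h v) 0) => ?; case: ifP => [?|/negbT ?]; lia.
Qed.
End Arith.

Section Conc.
Variables (R : realFieldType) (n d : nat) (i0 : 'I_d) (c : nat) (hc : (c < n)%N) (Hv : pred nat).
Hypotheses (C2 : forall v, (v < n)%N -> Hv v -> ~~ Hv (rr n c v))
  (C3 : forall v, (v < n)%N -> [|| Hv v, Hv (rr n c v) | rr n c v == v])
  (C4 : forall u v, (u < n)%N -> (v < n)%N -> Hv u -> Hv v ->
     ((u == (rr n c v + 1) %% n) || (u == (rr n c v + n - 1) %% n))%N -> u = v)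
  (C5 : forall v, (v < n)%N -> Hv v -> rr n c v != 0%N).

Definition rO (v : 'I_n) : 'I_n := Ordinal (rr_lt hc (ltn_ord v)).
Definition sg (x : pt n d) : pt n d := [ffun j => if j == i0 then rO (x j) else x j].
Definition Hp : pred (pt n d) := fun x => Hv (val (x i0)).

Lemma sg_i0 x : val (sg x i0) = rr n c (val (x i0)).
Proof. by rewrite ffunE eqxx. Qed.
Lemma sg_j x j : j != i0 -> sg x j = x j.
Proof. by move=> /negbTE h; rewrite ffunE h. Qed.

Lemma sgK : involutive sg.
Proof.
move=> x; apply/ffunP => j; case: (eqVneq j i0) => [->|nj]; last by rewrite !sg_j.
by apply/val_inj; rewrite !sg_i0 (rrK hc (ltn_ord _)).
Qed.

Lemma rr_eq u v : (u < n)%N -> (v < n)%N -> (rr n c u == rr n c v) = (u == v).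
Proof.
move=> hu hv; apply/eqP/eqP => [e|->] //.
by rewrite -(rrK hc hu) e rrK.
Qed.

Lemma Hp_s x : Hp x -> ~~ Hp (sg x).
Proof. move=> hx; rewrite /Hp /= sg_i0; exact: C2 (ltn_ord _) hx. Qed.

Lemma Hp_cov x : [|| Hp x, Hp (sg x) | sg x == x].
Proof.
rewrite /Hp /= sg_i0; case/or3P: (C3 (ltn_ord (x i0))) => [->|->|/eqP e]; rewrite ?orbT //.
suff -> : sg x == x by rewrite !orbT.
apply/eqP/ffunP => j; case: (eqVneq j i0) => [->|nj]; last by rewrite sg_j.
by apply/val_inj; rewrite sg_i0.
Qed.

Lemma plus_sg i x y : is_plus_e i (sg x) (sg y) = (if i == i0 then is_minus_e i x y else is_plus_e i x y).
Proof.
rewrite /is_plus_e /is_minus_e; case: (eqVneq i i0) => [->|ni]; apply: eq_forallb => j.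
  case: (eqVneq j i0) => [->|nj]; first by rewrite !sg_i0 (rr_plus hc (ltn_ord _) (ltn_ord _)).
  by rewrite !sg_j.
case: (eqVneq j i0) => [->|nj]; first by rewrite (eq_sym i0 i) (negbTE ni) !sg_i0 rr_eq // ltn_ord.
by rewrite !sg_j //; case: (eqVneq j i) => [->|//]; rewrite sg_j.
Qed.

Lemma minus_sg i x y : is_minus_e i (sg x) (sg y) = (if i == i0 then is_plus_e i x y else is_minus_e i x y).
Proof.
rewrite /is_plus_e /is_minus_e; case: (eqVneq i i0) => [->|ni]; apply: eq_forallb => j.
  case: (eqVneq j i0) => [->|nj]; first by rewrite !sg_i0 (rr_minus hc (ltn_ord _) (ltn_ord _)).
  by rewrite !sg_j.
case: (eqVneq j i0) => [->|nj]; first by rewrite (eq_sym i0 i) (negbTE ni) !sg_i0 rr_eq // ltn_ord.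
by rewrite !sg_j //; case: (eqVneq j i) => [->|//]; rewrite sg_j.
Qed.

Lemma K_s x y : lazyP R (sg x) (sg y) = lazyP R x y.
Proof.
rewrite /lazyP (inj_eq (can_inj sgK)); congr (_ + _); apply: eq_bigr => i _.
rewrite plus_sg minus_sg; case: ifP => // _; by rewrite addrC.
Qed.

Lemma K0 (x y : pt n d) : 0 <= lazyP R x y.
Proof.
rewrite /lazyP; apply: addr_ge0; first by apply: divr_ge0.
by apply: sumr_ge0 => i _; apply: divr_ge0; [apply: addr_ge0|apply: mulr_ge0].
Qed.

Lemma adj_ne i x y : i != i0 -> Hp x -> Hp y ->
  (is_plus_e i (sg y) x || is_minus_e i (sg y) x) = false.
Proof.
move=> ni hx hy; apply/negbTE; have hs := Hp_s hy.
apply/negP => /orP[] /forallP/(_ i0); rewrite (eq_sym i0 i) (negbTE ni) => /eqP e;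
  by move: hs hx; rewrite /Hp /= -e => /negbTE ->.
Qed.

Lemma adj_i0 x y : Hp x -> Hp y -> (is_plus_e i0 (sg y) x || is_minus_e i0 (sg y) x) -> x = y.
Proof.
move=> hx hy h.
have E : forall j, j != i0 -> x j = y j.
  move=> j nj; case/orP: h => /forallP/(_ j); rewrite (negbTE nj) sg_j // => /eqP e; exact/val_inj.
have e : val (x i0) = val (y i0).
  apply: (C4 (ltn_ord _) (ltn_ord _) hx hy).
  by case/orP: h => /forallP/(_ i0); rewrite eqxx sg_i0 => ->; rewrite ?orbT.
apply/ffunP => j; case: (eqVneq j i0) => [->|nj]; [exact/val_inj | exact: E].
Qed.

Lemma sg_neq x y : Hp x -> Hp y -> (sg y == x) = false.
Proof. by move=> hx hy; apply/negbTE; apply: contra (Hp_s hy) => /eqP ->. Qed.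

Lemma K_H x y : Hp x -> Hp y -> lazyP R (sg y) x <= lazyP R y x.
Proof.
move=> hx hy; case: (eqVneq y x) => [e|ne].
  subst y; rewrite /lazyP (sg_neq hx hx) eqxx mul0r add0r.
  rewrite (bigD1 i0) //= big1 ?addr0; last first.
    move=> i ni; have := adj_ne ni hx hx; case: (is_plus_e _ _ _); case: (is_minus_e _ _ _) => //= _.
    by rewrite addr0 mul0r.
  have hd : (0 < d)%N by case: (d) i0 => [[]|].
  have hd' : 1 <= (d%:R : R) by rewrite ler1n.
  have S0 : 0 <= \sum_(i < d) ((is_plus_e i x x)%:R + (is_minus_e i x x)%:R) / (4 * (d%:R : R)).
    by apply: sumr_ge0 => i _; apply: divr_ge0; [apply: addr_ge0|apply: mulr_ge0].
  have B : ((is_plus_e i0 (sg x) x)%:R + (is_minus_e i0 (sg x) x)%:R) / (4 * (d%:R : R)) <= 1 / 2.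
    rewrite ler_pdivrMr ?mulr_gt0 //; last by apply: lt_le_trans hd'.
    have b1 : ((is_plus_e i0 (sg x) x)%:R : R) <= 1 by case: (is_plus_e _ _ _).
    have b2 : ((is_minus_e i0 (sg x) x)%:R : R) <= 1 by case: (is_minus_e _ _ _).
    lra.
  rewrite mul1r; lra.
rewrite {1}/lazyP (sg_neq hx hy) mul0r add0r big1; first exact: K0.
move=> i _; case: (eqVneq i i0) => [->|ni].
  case h: (is_plus_e i0 (sg y) x || is_minus_e i0 (sg y) x).
    by move: ne; rewrite (adj_i0 hx hy h) eqxx.
  by move/negbT: h; rewrite negb_or => /andP[/negbTE -> /negbTE ->]; rewrite addr0 mul0r.
have := adj_ne ni hx hy; case: (is_plus_e _ _ _); case: (is_minus_e _ _ _) => //= _.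
by rewrite addr0 mul0r.
Qed.
End Conc.

Section Final.
Variables (R : realFieldType) (n d t : nat).

Definition u0 (x : pt n d) : R := (is_origin x)%:R.
Definition Q (f : nat -> pt n d) : R := \sum_y uvec (@lazyP R n d) u0 f t y.
Definition good (M : pt n d -> pt n d) := forall f, Q f <= Q (fun k => M (f k)).

Lemma good_id : good id. Proof. by move=> f. Qed.
Lemma good_comp M1 M2 : good M1 -> good M2 -> good (fun x => M2 (M1 x)).
Proof. by move=> g1 g2 f; apply: le_trans (g1 f) (g2 _). Qed.

Lemma good_refl (i0 : 'I_d) c (hc : (c < n)%N) (Hv : pred nat)
  (C2 : forall v, (v < n)%N -> Hv v -> ~~ Hv (rr n c v))
  (C3 : forall v, (v < n)%N -> [|| Hv v, Hv (rr n c v) | rr n c v == v])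
  (C4 : forall u v, (u < n)%N -> (v < n)%N -> Hv u -> Hv v ->
     ((u == (rr n c v + 1) %% n) || (u == (rr n c v + n - 1) %% n))%N -> u = v)
  (C5 : forall v, (v < n)%N -> Hv v -> rr n c v != 0%N) :
  good (mv (sg i0 hc) (Hp i0 Hv)).
Proof.
move=> f; rewrite /Q; apply: (polar (@K0 R n d) (sgK i0 hc) (Hp_s (i0:=i0) hc C2) (Hp_cov i0 hc C3) (K_s R i0 hc) (K_H R (i0:=i0) hc C2 C4)).
  by move=> x; rewrite /u0; case: (is_origin x).
move=> x hx; rewrite /u0.
have -> : is_origin (sg i0 hc x) = false.
  apply/negbTE/negP => /forallP/(_ i0); rewrite sg_i0; apply/negP; exact: C5 (ltn_ord _) hx.
by case: (is_origin x).
Qed.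

Lemma mv_i0 (i0 : 'I_d) c (hc : (c < n)%N) (Hv : pred nat) g :
  val (mv (sg i0 hc) (Hp i0 Hv) g i0) = if Hv (val (g i0)) then rr n c (val (g i0)) else val (g i0).
Proof. by rewrite /mv /Hp /=; case: ifP => // _; rewrite sg_i0. Qed.

Lemma mv_j (i0 : 'I_d) c (hc : (c < n)%N) (Hv : pred nat) g j :
  j != i0 -> mv (sg i0 hc) (Hp i0 Hv) g j = g j.
Proof. by move=> nj; rewrite /mv; case: ifP => // _; rewrite sg_j. Qed.

Hypothesis hn : (0 < n)%N.
Let h := n./2.
Lemma hh : n = (h + h)%N \/ n = (h + h + 1)%N.
Proof. have := odd_double_half n; rewrite /h; case: (odd n) => /= <-; rewrite -addnn; lia. Qed.

Lemma coord_seq (i0 : 'I_d) k : (k <= h)%N -> exists M, [/\ good M,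
  forall g, val (M g i0) = mseq n h k (val (g i0)) & forall g j, j != i0 -> M g j = g j].
Proof.
elim: k => [|k IH] hk; first by exists id; split => //; apply: good_id.
have [M [gM M1 M2]] := IH (ltnW hk).
have hj : (k < h)%N by [].
exists (fun x => mv (sg i0 (F1c hh hj)) (Hp i0 (H1 n h k)) (M x)); split.
- apply: good_comp gM _; apply: good_refl.
  + move=> v; exact: (@F1_2 n h hh k hj v).
  + move=> v; exact: (@F1_3 n h hh k hj v).
  + move=> u v; exact: (@F1_4 n h hh k hj u v).
  + move=> v; exact: (@F1_5 n h hh k hj v).
- by move=> g; rewrite mv_i0 M1.
- by move=> g j nj; rewrite mv_j // M2.
Qed.

Lemma coord (i0 : 'I_d) : exists M, [/\ good M,
  forall g, val (M g i0) = h & forall g j, j != i0 -> M g j = g j].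
Proof.
have [M [gM M1 M2]] := coord_seq i0 (leqnn h).
exists (fun x => mv (sg i0 hn) (Hp i0 (H2 h)) (M x)); split.
- apply: good_comp gM _; apply: good_refl.
  + move=> v; exact: (@F2_2 n h hh v).
  + move=> v; exact: (@F2_3 n h hh v).
  + move=> u v; exact: (@F2_4 n h hh u v).
  + move=> v; exact: (@F2_5 n h hh v).
- by move=> g; rewrite mv_i0 M1; exact: (@m2_mseq n h hh _ (ltn_ord (g i0))).
- by move=> g j nj; rewrite mv_j // M2.
Qed.

Lemma uvec_ext f f' : (forall k, f k = f' k) -> forall s y, uvec (@lazyP R n d) u0 f s y = uvec (@lazyP R n d) u0 f' s y.
Proof.
move=> e; elim=> [|s IH] y //=; rewrite /kill /Kv e; case: ifP => // _.
by apply: eq_bigr => x _; rewrite IH.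
Qed.

Lemma all_coords (a : pt n d) (ha : forall i, val (a i) = h) k : (k <= d)%N ->
  exists M, good M /\ forall g (j : 'I_d), (j < k)%N -> M g j = a j.
Proof.
elim: k => [|k IH] hk; first by exists id; split => //; apply: good_id.
have [M [gM MA]] := IH (ltnW hk).
have [N [gN N1 N2]] := coord (Ordinal hk).
exists (fun x => N (M x)); split; first exact: good_comp.
move=> g j; rewrite ltnS leq_eqVlt => /orP[/eqP ej|lj].
  have -> : j = Ordinal hk by apply/val_inj.
  by apply/val_inj; rewrite N1 ha.
rewrite N2 ?MA //; apply: contraTneq lj => ->; by rewrite ltnn.
Qed.

End Final.

Theorem theorem1p2 (R : realFieldType) (n d : nat) (hn : (0 < n)%N) (hd : (0 < d)%N)
  (f : nat -> pt n d) (a : pt n d) (ha : forall i, val (a i) = n./2) (t : nat)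
  (ht : (1 <= t)%N) :
  avoid_prob R t f <= avoid_prob R t (fun _ => a).
Proof.
have E : forall g : nat -> pt n d, avoid_prob R t g = Q R t g.
  move=> g; have e := sumS (@lazyP R n d) (@is_origin n d) g t; apply: etrans (esym e) _; rewrite /Q; apply: eq_bigr => y _; exact: S_uvec.
rewrite !E.
have [M [gM MA]] := all_coords R t hn ha (leqnn d).
apply: le_trans (gM f) _; rewrite le_eqVlt; apply/orP; left; apply/eqP.
rewrite /Q; apply: eq_bigr => y _; apply: uvec_ext => k.
by apply/ffunP => j; rewrite MA.
Qed.
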